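(* Let ${\bf i}=(i_1,\dots,i_N)$ be a reduced word for $w_0$. Then ${\mathcal H}_{\bf i}=\Big\{\big(\sum_{i\in I}m_{1,i}h_i,\ \sum_{i\in I}m_{2,i}h_i,\ \dots,\ \sum_{i\in I}m_{N,i}h_i\big)\ \Big|\ (h_1,\dots,h_n)\in\mathbb Z^n\Big\}$.
   Context: $A=(a_{ij})_{i,j\in I}$ is the Cartan matrix of a simple Lie algebra ($a_{ij}=\alpha_j(h_i)$), $I=\{1,\dots,n\}$, $w_0$ the longest Weyl group element of length $N$. For $k\in[1,N]$ let $k^{(+)}:=\min\{l>k\mid i_l=i_k\}$ when it exists. Define linear forms on $\mathbb Z^N$: $\beta_k(x)=x_k+\sum_{k<j<k^{(+)}}a_{i_k,i_j}x_j+x_{k^{(+)}}$, and ${\mathcal H}_{\bf i}:=\{x\in\mathbb Z^N\mid\beta_k(x)=0$ for all $k$ such that $k^{(+)}$ exists (i.e. $k^{(+)}\le N$)$\}$. Let $Q'=\bigoplus_{i\in I}\mathbb Z\alpha'_i$ with reflections $s_i(\alpha'_j)=\alpha'_j-a_{ji}\alpha'_i$ (the root lattice and Weyl group action of the Langlands dual algebra). Set $\alpha^{(k)}:=s_{i_N}s_{i_{N-1}}\cdots s_{i_{k+1}}(\alpha'_{i_k})$ and write $\alpha^{(k)}=\sum_{i\in I}m_{k,i}\alpha'_i$ with $m_{k,i}\in\mathbb Z_{\ge0}$ (these $\alpha^{(k)}$ are exactly the positive roots). *)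

(* Defs.v *)
From HB Require Import structures.
From mathcomp Require Import all_boot all_order all_algebra.
Set Implicit Arguments. Unset Strict Implicit. Unset Printing Implicit Defensive.
Import Order.TTheory GRing.Theory Num.Theory.
Local Open Scope ring_scope.

(* Index set I = {1..n} is rendered as 'I_n;  A i j = a_ij = alpha_j(h_i). *)

(* Cartan matrix of a (finite-dimensional) simple Lie algebra: an
   indecomposable generalized Cartan matrix all of whose principal minors
   are positive (finite type, Kac Thm 4.3 / Lemma 4.4). *)
Definition is_simple_cartan (n : nat) (A : 'M[int]_n) : Prop :=
  [/\ (0 < n)%N,
      (forall i, A i i = 2) /\
      (forall i j, i != j -> A i j <= 0),
      (forall i j, A i j = 0 <-> A j i = 0),
      (forall S : {set 'I_n},
          (forall i j, i \in S -> j \notin S -> A i j = 0) ->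
          S = set0 \/ S = setT)
    & (forall (k : nat) (f : 'I_k -> 'I_n), injective f ->
          0 < \det (\matrix_(i, j) A (f i) (f j)))].

(* Simple reflection s_i on Q' = (+)_j Z alpha'_j, coordinates as column
   vectors: s_i(alpha'_j) = alpha'_j - a_ji alpha'_i. *)
Definition refl_mx (n : nat) (A : 'M[int]_n) (i : 'I_n) : 'M[int]_n :=
  \matrix_(k, j) ((k == j)%:Z - (k == i)%:Z * A j i).

Definition word_mx (n : nat) (A : 'M[int]_n) (w : seq 'I_n) : 'M[int]_n :=
  foldr (fun i M => refl_mx A i *m M) 1%:M w.

Definition is_reduced (n : nat) (A : 'M[int]_n) (w : seq 'I_n) : Prop :=
  forall w' : seq 'I_n, word_mx A w' = word_mx A w -> (size w <= size w')%N.

(* w is a reduced word for the longest element w0: it is reduced and of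
   maximal length among reduced words (w0 is the unique element of maximal
   length). *)
Definition is_reduced_w0 (n : nat) (A : 'M[int]_n) (w : seq 'I_n) : Prop :=
  is_reduced A w /\ (forall w', is_reduced A w' -> (size w' <= size w)%N).

(* alpha^(k) = s_{i_N} ... s_{i_{k+1}} (alpha'_{i_k})  (0-indexed k). *)
Definition alpha_k (n N : nat) (A : 'M[int]_n) (w : N.-tuple 'I_n) (k : 'I_N)
  : 'cV[int]_n :=
  word_mx A (rev (drop k.+1 w)) *m delta_mx (tnth w k) 0.

Definition mcoef (n N : nat) (A : 'M[int]_n) (w : N.-tuple 'I_n) (k : 'I_N)
  (i : 'I_n) : int := alpha_k A w k i 0.

(* H_i : beta_k(x) = 0 whenever k^(+) = l exists, i.e. l > k is minimal
   with i_l = i_k. *)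
Definition in_H (n N : nat) (A : 'M[int]_n) (w : N.-tuple 'I_n)
  (x : 'I_N -> int) : Prop :=
  forall k l : 'I_N, (k < l)%N -> tnth w l = tnth w k ->
    (forall j : 'I_N, (k < j < l)%N -> tnth w j != tnth w k) ->
    x k + (\sum_(j : 'I_N | (k < j < l)%N) A (tnth w k) (tnth w j) * x j) + x l
      = 0.

(* Main.v *)
Require Import Defs.
From HB Require Import structures.
From mathcomp Require Import all_boot all_order all_algebra.
From mathcomp Require Import zify.
Import Order.TTheory GRing.Theory Num.Theory.
Local Open Scope ring_scope.

Lemma word_cat (n : nat) (A : 'M[int]_n) (r1 r2 : seq 'I_n) :
  word_mx A (r1 ++ r2) = word_mx A r1 *m word_mx A r2.
Proof.
elim: r1 => [|a r IH] /=; first by rewrite mul1mx.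
by rewrite IH mulmxA.
Qed.

Lemma word_rcons (n : nat) (A : 'M[int]_n) (r : seq 'I_n) a :
  word_mx A (rcons r a) = word_mx A r *m refl_mx A a.
Proof. by rewrite -cats1 word_cat /= mulmx1. Qed.

Lemma word_notin (n : nat) (A : 'M[int]_n) (u : seq 'I_n) (c : 'I_n) (v : 'cV[int]_n) :
  c \notin u -> (word_mx A u *m v) c 0 = v c 0.
Proof.
elim: u => [|a u IH] /=; first by rewrite mul1mx.
rewrite in_cons negb_or => /andP[ca cu].
rewrite -mulmxA.
have -> : (refl_mx A a *m (word_mx A u *m v)) c 0 = (1%:M *m (word_mx A u *m v)) c 0.
  rewrite !mxE; apply: eq_bigr => k _; rewrite !mxE (negbTE ca) mul0r subr0.
  by case: (c == k).
by rewrite mul1mx IH.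
Qed.

Definition ev {n : nat} (c : 'I_n) : 'cV[int]_n := delta_mx c 0.

Lemma refl_ev (n : nat) (A : 'M[int]_n) (a c : 'I_n) :
  refl_mx A a *m ev c = ev c - A c a *: ev a.
Proof.
apply/matrixP => i j; rewrite !mxE (bigD1 c) //= big1.
  rewrite !mxE !eqxx /= (ord1 j) eqxx /= addr0 mulr1; by case: (i == a); case: (i == c);
  rewrite /= ?mulr1 ?mulr0 ?mul1r ?mul0r.
by move=> k kc; rewrite !mxE (negbTE kc) /= mulr0.
Qed.
Definition al {n : nat} (A : 'M[int]_n) (d : 'I_n) (s : seq 'I_n) (p : nat) : 'cV[int]_n :=
  word_mx A (rev (drop p.+1 s)) *m ev (nth d s p).

Lemma telescope (n : nat) (A : 'M[int]_n) (d : 'I_n) (u : seq 'I_n) (c : 'I_n) :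
  word_mx A (rev u) *m ev c = ev c - \sum_(0 <= p < size u)
     A c (nth d u p) *: (word_mx A (rev (drop p.+1 u)) *m ev (nth d u p)).
Proof.
elim: u => [|a u IH]; first by rewrite /= big_geq // mul1mx subr0.
rewrite rev_cons word_rcons -mulmxA refl_ev mulmxBr IH /= big_nat_recl //=.
rewrite drop0 -scalemxAr opprD addrAC.
by rewrite addrA.
Qed.

Lemma al_cat (n : nat) (A : 'M[int]_n) (d : 'I_n) (s1 t : seq 'I_n) q :
  al A d (s1 ++ t) (size s1 + q)%N = al A d t q.
Proof.
rewrite /al drop_cat nth_cat !ifF; try lia.
by rewrite -addnS !addKn.
Qed.

Lemma drop_cat_le (T : Type) (u r : seq T) p : (p <= size u)%N ->
  drop p (u ++ r) = drop p u ++ r.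
Proof.
rewrite drop_cat leq_eqVlt => /orP[/eqP->|->] //.
by rewrite ltnn subnn drop0 drop_size.
Qed.

Lemma core (n : nat) (A : 'M[int]_n) (d : 'I_n)
  (c : 'I_n) (hc : A c c = 2) (u s2 : seq 'I_n) :
  let t := c :: u ++ c :: s2 in
  al A d t 0 + \sum_(0 <= p < size u) A c (nth d u p) *: al A d t p.+1
    + al A d t (size u).+1 = 0.
Proof.
move=> t.
have h0 : al A d t 0 = word_mx A (rev s2) *m (refl_mx A c *m (word_mx A (rev u) *m ev c)).
  by rewrite /al /= drop0 rev_cat rev_cons word_cat word_rcons !mulmxA.
have hl : al A d t (size u).+1 = word_mx A (rev s2) *m ev c.
  rewrite /al /= -(addn0 (size u)) drop_cat nth_cat !ifF; try lia.
  by rewrite !addn0 subnn subSnn /= drop0.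
have hp : forall p, (p < size u)%N -> al A d t p.+1 = word_mx A (rev s2) *m (refl_mx A c *m
      (word_mx A (rev (drop p.+1 u)) *m ev (nth d u p))).
  move=> p hp; rewrite /al /= drop_cat_le // nth_cat hp rev_cat rev_cons word_cat word_rcons.
  by rewrite !mulmxA.
have hS : \sum_(0 <= p < size u) A c (nth d u p) *: al A d t p.+1 =
   word_mx A (rev s2) *m (refl_mx A c *m \sum_(0 <= p < size u)
      A c (nth d u p) *: (word_mx A (rev (drop p.+1 u)) *m ev (nth d u p))).
  rewrite !mulmx_sumr; apply: eq_big_nat => p /andP[_ hp1].
  by rewrite hp // -!scalemxAr.
rewrite hS h0 hl (telescope _ A d u c) mulmxBr refl_ev hc.
rewrite (_ : ev c - 2 *: ev c = - ev c :> 'cV[int]_n); last first.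
  by rewrite scaler_nat mulr2n opprD addrA subrr sub0r.
by rewrite mulmxBr mulmxN subrK addNr.
Qed.

Definition fh {n : nat} (h : 'I_n -> int) (v : 'cV[int]_n) : int := \sum_(i < n) v i 0 * h i.

Lemma fhD (n : nat) (h : 'I_n -> int) (a b : 'cV[int]_n) : fh h (a + b) = fh h a + fh h b.
Proof. by rewrite /fh -big_split; apply: eq_bigr => i _; rewrite !mxE mulrDl. Qed.

Lemma fhZ (n : nat) (h : 'I_n -> int) (c : int) (a : 'cV[int]_n) : fh h (c *: a) = c * fh h a.
Proof. by rewrite /fh mulr_sumr; apply: eq_bigr => i _; rewrite !mxE mulrA. Qed.

Lemma fh0 (n : nat) (h : 'I_n -> int) : fh h 0 = 0.
Proof. by rewrite /fh big1 // => i _; rewrite mxE mul0r. Qed.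

Lemma fh_sum (n : nat) (h : 'I_n -> int) m1 m2 (F : nat -> 'cV[int]_n) :
  fh h (\sum_(m1 <= p < m2) F p) = \sum_(m1 <= p < m2) fh h (F p).
Proof.
rewrite /fh exchange_big /=; apply: eq_bigr => i _.
by rewrite summxE mulr_suml.
Qed.

Lemma sum_between (F : nat -> int) (k l m : nat) : (k < l)%N -> (l <= m)%N ->
  \sum_(0 <= j < m | (k < j < l)%N) F j = \sum_(0 <= p < l - k.+1) F (k.+1 + p)%N.
Proof.
move=> hkl hlm.
rewrite big_mkcond (big_cat_nat (n:=l) (leq0n l) hlm) /=.
rewrite [X in _ + X]big_nat_cond [X in _ + X]big1 ?addr0; last first.
  move=> j /andP[/andP[h1 h2] _]; rewrite ifF //.
  apply/negbTE/negP => /andP[_ hjl]; have := leq_trans hjl h1; by rewrite ltnn.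
have hk : (k.+1 <= l)%N by [].
rewrite (big_cat_nat (n:=k.+1) (leq0n k.+1) hk) /=.
rewrite big_nat_cond big1 ?add0r; last first.
  move=> j /andP[/andP[h1 h2] _]; rewrite ifF //.
  apply/negbTE/negP => /andP[hkj _]; have := leq_trans hkj h2; by rewrite ltnn.
rewrite -{1}(add0n k.+1) big_addn.
apply: eq_big_nat => p /andP[_ hp].
have h1 : (p + k.+1 < l)%N by lia.
have h2 : (k < p + k.+1)%N by lia.
by rewrite h1 h2 addnC.
Qed.

Lemma L1 (n : nat) (A : 'M[int]_n) (d : 'I_n) (hdiag : forall c, A c c = 2)
  (h : 'I_n -> int) (s : seq 'I_n) (k l : nat) :
  (k < l)%N -> (l < size s)%N -> nth d s l = nth d s k ->
  fh h (al A d s k) + \sum_(0 <= j < size s | (k < j < l)%N)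
     A (nth d s k) (nth d s j) * fh h (al A d s j) + fh h (al A d s l) = 0.
Proof.
move=> hkl hls hnl.
have a1 : (l - k.+1 <= size s - k.+1)%N by clear -hkl hls; lia.
have a2 : (k < size s)%N by clear -hkl hls; lia.
have a3 : (l - k.+1 + k.+1)%N = l by clear -hkl hls; lia.
have a4 : l = (k + (l - k.+1).+1)%N by clear -hkl hls; lia.
set c := nth d s k.
set t := drop k s.
have alt : forall j, al A d s (k + j)%N = al A d t j.
  move=> j; have := al_cat _ A d (take k s) (drop k s) j.
  by rewrite cat_take_drop size_takel // ltnW.
set u := take (l - k.+1) (drop k.+1 s).
set s2 := drop l.+1 s.
have hsu : size u = (l - k.+1)%N by rewrite /u size_takel // size_drop.
have teq : t = c :: u ++ c :: s2.
  rewrite /t (drop_nth d) //.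
  rewrite -{1}(cat_take_drop (l - k.+1) (drop k.+1 s)) drop_drop a3.
  by rewrite [drop l s](drop_nth d) // hnl.
rewrite (sum_between _ _ _ _ hkl (ltnW hls)).
rewrite -{1}(addn0 k) alt {2}a4 alt -hsu.
rewrite (eq_big_nat _ _ (F2 := fun p => A c (nth d u p) * fh h (al A d t p.+1))); last first.
  move=> p /andP[_ hp]; rewrite addSnnS alt -(nth_drop k) -/t teq /= nth_cat.
  by rewrite hp.
have := congr1 (fh h) (core _ A d c (hdiag c) u s2).
rewrite -teq fh0 !fhD fh_sum => H; apply: (etrans _ H); congr (_ + _ + _).
by apply: eq_bigr => p _; rewrite fhZ.
Qed.

Definition inHs {n : nat} (A : 'M[int]_n) (d : 'I_n) (s : seq 'I_n) (x : nat -> int) : Prop :=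
  forall k l, (k < l)%N -> (l < size s)%N -> nth d s l = nth d s k ->
    (forall j, (k < j < l)%N -> nth d s j != nth d s k) ->
    x k + \sum_(0 <= j < size s | (k < j < l)%N) A (nth d s k) (nth d s j) * x j + x l = 0.

Lemma inHs_tail (n : nat) (A : 'M[int]_n) (d : 'I_n) (c : 'I_n) (s : seq 'I_n) x :
  inHs A d (c :: s) x -> inHs A d s (fun k => x k.+1).
Proof.
move=> H k l hkl hls hn hb.
have hb' : forall j, (k.+1 < j < l.+1)%N -> nth d (c :: s) j != nth d (c :: s) k.+1.
  by case=> [|j] //= hj; apply: hb.
have := H k.+1 l.+1 hkl hls hn hb'.
rewrite (sum_between _ _ _ _ (hkl : (k.+1 < l.+1)%N) (ltnW hls : (l.+1 <= size (c :: s))%N)) (sum_between _ _ _ _ hkl (ltnW hls)).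
by [].
Qed.

Lemma fh_shift (n : nat) (h : 'I_n -> int) (c : 'I_n) (t : int) (v : 'cV[int]_n) :
  fh (fun i => h i + (i == c)%:R * t) v = fh h v + v c 0 * t.
Proof.
rewrite /fh; under eq_bigr do rewrite mulrDr; rewrite big_split /=; congr (_ + _).
rewrite (bigD1 c) //= big1 ?addr0; first by rewrite eqxx mul1r.
by move=> i /negbTE ->; rewrite mul0r mulr0.
Qed.

Lemma inv_main (n : nat) (A : 'M[int]_n) (d : 'I_n) (hdiag : forall c, A c c = 2)
  (s : seq 'I_n) : forall x, inHs A d s x ->
  exists h, forall k, (k < size s)%N -> x k = fh h (al A d s k).
Proof.
elim: s => [|c s IH] x Hx; first by exists (fun _ => 0).
have [h' Hh'] := IH _ (inHs_tail _ _ _ _ _ _ Hx).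
have alS : forall k, al A d (c :: s) k.+1 = al A d s k by [].
case: (boolP (c \in s)) => cs.
  exists h'; case=> [|k] hk; last by rewrite Hh'.
  set l := (index c s).+1.
  have hi : (index c s < size s)%N by rewrite index_mem.
  have hl : (l < size (c :: s))%N by [].
  have hnl : nth d (c :: s) l = nth d (c :: s) 0 by rewrite /= nth_index.
  have hb : forall j, (0 < j < l)%N -> nth d (c :: s) j != nth d (c :: s) 0.
    case=> [|j] //= hj.
    by have := before_find d hj => /= ->.
  have E1 := Hx 0%N l (ltn0Sn _) hl hnl hb.
  have E2 := L1 _ A d hdiag h' (c :: s) 0%N l (ltn0Sn _) hl hnl.
  have E := etrans E1 (esym E2).
  have Sx : \sum_(0 <= j < size (c :: s) | (0 < j < l)%N)
      A (nth d (c :: s) 0) (nth d (c :: s) j) * x j =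
    \sum_(0 <= j < size (c :: s) | (0 < j < l)%N)
      A (nth d (c :: s) 0) (nth d (c :: s) j) * fh h' (al A d (c :: s) j).
    apply: eq_bigr => -[|j] // /andP[_ hj]; rewrite Hh' //.
    exact: (ltn_trans (hj : (j < index c s)%N) hi).
  rewrite Sx Hh' // in E.
  by move/addIr/addIr: E.
set t := x 0%N - fh h' (al A d (c :: s) 0).
exists (fun i => h' i + (i == c)%:R * t).
have cs' : c \notin rev s by rewrite mem_rev.
case=> [|k] hk; rewrite fh_shift.
  rewrite /t /al /= drop0 word_notin // mxE eqxx /= mul1r.
  by rewrite addrC subrK.
rewrite alS -Hh' //.
rewrite /al word_notin; last first.
  by rewrite mem_rev; apply: contra cs; apply: mem_drop.
rewrite mxE.
have -> : (c == nth d s k) = false.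
  apply/negbTE; apply: contra cs => /eqP ->; exact: mem_nth.
by rewrite /= mul0r addr0.
Qed.

Theorem lemma8p1 (n : nat) (A : 'M[int]_n) (hA : is_simple_cartan A)
  (N : nat) (w : N.-tuple 'I_n) (hw : is_reduced_w0 A w) :
  forall x : 'I_N -> int,
    in_H A w x <->
    exists h : 'I_n -> int, forall k : 'I_N, x k = \sum_(i < n) mcoef A w k i * h i.
Proof.
move=> x.
case: hA => hn [hdiag _] _ _ _.
set d : 'I_n := Ordinal hn.
have alE : forall (k : 'I_N) i, mcoef A w k i = al A d w k i 0.
  by move=> k i; rewrite /mcoef /alpha_k /al (tnth_nth d).
have sumconv : forall (y : nat -> int), (forall j : 'I_N, y j = x j) -> forall k l : 'I_N,
    \sum_(j : 'I_N | (k < j < l)%N) A (tnth w k) (tnth w j) * x j =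
    \sum_(0 <= j < size w | (k < j < l)%N) A (nth d w k) (nth d w j) * y j.
  move=> y hy k l; rewrite size_tuple big_mkord; apply: eq_bigr => j _.
  by rewrite !(tnth_nth d) hy.
set xn : nat -> int := fun j => if insub j is Some k then x k else 0.
have xnE : forall k : 'I_N, xn k = x k by move=> k; rewrite /xn valK.
split.
  move=> Hx.
  have Hs : inHs A d w xn.
    move=> k l hkl hls hnl hb.
    rewrite size_tuple in hls.
    pose K := Ordinal (ltn_trans hkl hls); pose L := Ordinal hls.
    have hKL : tnth w L = tnth w K by rewrite !(tnth_nth d).
    have hbK : forall j : 'I_N, (K < j < L)%N -> tnth w j != tnth w K.
      by move=> j hj; rewrite !(tnth_nth d); apply: hb.
    have := Hx K L hkl hKL hbK.
    rewrite (sumconv xn xnE) -!xnE.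
    by [].
  have [h Hh] := inv_main _ A d hdiag w xn Hs.
  exists h => k; rewrite -xnE Hh ?size_tuple //.
  by rewrite /fh; apply: eq_bigr => i _; rewrite alE.
move=> [h Hh] k l hkl hnl hb.
have hy : forall j : 'I_N, fh h (al A d w j) = x j.
  by move=> j; rewrite Hh /fh; apply: eq_bigr => i _; rewrite alE.
rewrite (sumconv (fun j => fh h (al A d w j)) hy) -!hy.
have hnl' : nth d w l = nth d w k by rewrite -!(tnth_nth d).
have hls : (l < size w)%N by rewrite size_tuple.
exact: (L1 _ A d hdiag h w k l hkl hls hnl').
Qed.
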